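(* For every integer $n\ge 3$, $A'_n\equiv 0\pmod{24}$.
   Context: For $m\in\mathbb{N}$, $A_m=\sum_{k=0}^m\binom{m}{k}^2\binom{m+k}{k}^2$ (Apéry numbers), and $A'_n=\sum_{k=0}^n\binom{n}{k}A_k$ is its binomial transform. *)

(* Defs.v *)
From mathcomp Require Import all_boot.

Definition apery (m : nat) : nat :=
  \sum_(0 <= k < m.+1) ('C(m, k) ^ 2 * 'C(m + k, k) ^ 2).

Definition apery' (n : nat) : nat :=
  \sum_(0 <= k < n.+1) ('C(n, k) * apery k).

(* Main.v *)
From mathcomp Require Import all_boot zify.
Require Import Defs.

Lemma sum_mod d a b (f g : nat -> nat) :
  (forall i, a <= i < b -> f i = g i %[mod d]) ->
  \sum_(a <= i < b) f i = \sum_(a <= i < b) g i %[mod d].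
Proof.
move=> H; rewrite -modn_summ -[RHS]modn_summ; congr (_ %% _).
by apply: eq_big_nat => i Hi; apply: H.
Qed.

Lemma sum_ext0 n M (g : nat -> nat) : n <= M -> (forall i, n <= i < M -> g i = 0) ->
  \sum_(0 <= i < n) g i = \sum_(0 <= i < M) g i.
Proof.
move=> nM H; rewrite (big_cat_nat (leq0n n) nM) /= [X in _ = _ + X]big1_seq ?addn0 //.
move=> i /andP[_]; rewrite mem_index_iota; exact: H.
Qed.

Lemma sum3 N f : \sum_(0 <= k < 3 * N) f k =
  \sum_(0 <= b < N) (f (3 * b) + f (3 * b + 1) + f (3 * b + 2)).
Proof.
elim: N => [|N IH]; first by rewrite !big_geq.
rewrite (_ : 3 * N.+1 = (3 * N).+2.+1); last by lia.
rewrite !big_nat_recr //= IH -!addnA; congr (_ + _).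
by congr (_ + (f _ + f _)); lia.
Qed.

Lemma binS3 n k : 'C(n.+3, k.+3) = 'C(n, k.+3) + 3 * ('C(n, k.+2) + 'C(n, k.+1)) + 'C(n, k).
Proof. rewrite !binS; lia. Qed.

Lemma m3 y z : y + z * 3 = y %[mod 3].
Proof. by rewrite addnC modnMDl. Qed.

Lemma m3' x y z : x + 3 * y + z = x + z %[mod 3].
Proof. by rewrite (_ : x + 3 * y + z = (x + z) + y * 3) ?m3 //; lia. Qed.

Lemma binS3s n s : s < 3 -> 'C(n.+3, s) = 'C(n, s) %[mod 3].
Proof.
case: s => [|[|[|]]] //= _; rewrite ?bin0 //.
  by rewrite !bin1 -addn3 -(mul1n 3) m3.
rewrite !binS !bin1 !bin0.
rewrite (_ : 'C(n, 2) + n + (n + 1) + (n + 1 + 1) = 'C(n,2) + (n+1) * 3); last by lia.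
by rewrite m3.
Qed.

Lemma lucas3 a b r s : r < 3 -> s < 3 ->
  'C(3 * a + r, 3 * b + s) = 'C(a, b) * 'C(r, s) %[mod 3].
Proof.
move=> hr hs; elim: a b => [|a IH] b.
  have -> : 3 * 0 = 0 by [].
  case: b => [|b]; first by rewrite !add0n bin0 mul1n.
  rewrite add0n bin_small ?bin0n /= ?mod0n //; lia.
rewrite (_ : 3 * a.+1 + r = (3 * a + r).+3); last by lia.
case: b => [|b].
  have -> : 3 * 0 = 0 by [].
  have := IH 0; rewrite !add0n bin0 mul1n => IH0.
  by rewrite binS3s // IH0 bin0 mul1n.
rewrite (_ : 3 * b.+1 + s = (3 * b + s).+3); last by lia.
rewrite binS3 m3'.
rewrite (_ : (3 * b + s).+3 = 3 * b.+1 + s); last by lia.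
rewrite -modnDm IH IH modnDm binS; congr (_ %% _); lia.
Qed.

Lemma term3 m b r s : r < 3 -> s < 3 ->
  'C(3 * m + r, 3 * b + s) * 'C(3 * m + r + (3 * b + s), 3 * b + s) =
  'C(m, b) * 'C(m + b, b) * ('C(r, s) * 'C(r + s, s)) %[mod 3].
Proof.
move=> hr hs; rewrite -modnMm lucas3 // modnMm.
have [sr|rs] := ltnP r s.
  by rewrite (bin_small sr) !(muln0, mul0n).
have [rs3|rs3] := ltnP (r + s) 3.
  rewrite (_ : 3 * m + r + (3 * b + s) = 3 * (m + b) + (r + s)); last by lia.
  rewrite -modnMm lucas3 // modnMm; congr (_ %% _); lia.
have r2 : r = 2 by lia.
subst r; case: s hs rs rs3 => [|[|[|]]] // _ _ _.
  rewrite (_ : 3 * m + 2 + (3 * b + 1) = 3 * (m + b + 1) + 0); last by lia.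
  by rewrite -modnMm lucas3 // modnMm !(muln0, mul0n) [RHS]/= (_ : 'C(3,1) = 1 * 3) // !mulnA modnMl.
rewrite (_ : 3 * m + 2 + (3 * b + 2) = 3 * (m + b + 1) + 1); last by lia.
by rewrite -modnMm lucas3 // modnMm !(muln0, mul0n) [RHS]/= (_ : 'C(4,2) = 2 * 3) // !mulnA modnMl.
Qed.

Lemma term3sq m b r s : r < 3 -> s < 3 ->
  'C(3 * m + r, 3 * b + s) ^ 2 * 'C(3 * m + r + (3 * b + s), 3 * b + s) ^ 2 =
  ('C(m, b) ^ 2 * 'C(m + b, b) ^ 2) * ('C(r, s) ^ 2 * 'C(r + s, s) ^ 2) %[mod 3].
Proof.
move=> hr hs; rewrite -expnMn -modnXm term3 // modnXm !expnMn; congr (_ %% _); lia.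
Qed.

Lemma apery_small r : r < 3 -> apery r =
  'C(r, 0) ^ 2 * 'C(r, 0) ^ 2 + 'C(r, 1) ^ 2 * 'C(r + 1, 1) ^ 2 + 'C(r, 2) ^ 2 * 'C(r + 2, 2) ^ 2.
Proof. by case: r => [|[|[|]]] // _; rewrite /apery unlock. Qed.

Lemma add3_mod d x1 x2 x3 y1 y2 y3 : x1 = y1 %[mod d] -> x2 = y2 %[mod d] -> x3 = y3 %[mod d] ->
  x1 + x2 + x3 = y1 + y2 + y3 %[mod d].
Proof. move=> h1 h2 h3; rewrite -modnDm h3 -(modnDm x1) h1 h2. rewrite modnDm.
by rewrite -addnA modnDml addnCA modnDml addnCA addnA. Qed.
Arguments add3_mod {d x1 x2 x3 y1 y2 y3}.

Lemma apery_mod3 m r : r < 3 -> apery (3 * m + r) = apery m * apery r %[mod 3].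
Proof.
move=> hr; rewrite /apery (@sum_ext0 _ (3 * m.+1)); last first.
- by move=> i /andP[hi _]; rewrite bin_small.
- by lia.
rewrite sum3 -/(apery r) big_distrl /=; apply: sum_mod => b _.
rewrite apery_small //.
have := term3sq m b r 0 hr isT; rewrite !addn0 => H0.
rewrite (add3_mod H0 (term3sq m b r 1 hr isT) (term3sq m b r 2 hr isT)).
congr (_ %% _); lia.
Qed.

Lemma aperyp_small r : r < 3 -> apery' r =
  'C(r, 0) * apery 0 + 'C(r, 1) * apery 1 + 'C(r, 2) * apery 2.
Proof. by case: r => [|[|[|]]] // _; rewrite /apery' /apery unlock. Qed.

Lemma aperyp_mod3 m r : r < 3 -> apery' (3 * m + r) = apery' m * apery' r %[mod 3].
Proof.
move=> hr; rewrite /apery' (@sum_ext0 _ (3 * m.+1)); last first.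
- by move=> i /andP[hi _]; rewrite bin_small.
- by lia.
have T s b : s < 3 -> 'C(3 * m + r, 3 * b + s) * apery (3 * b + s) =
    'C(m, b) * apery b * ('C(r, s) * apery s) %[mod 3].
  move=> hs; rewrite -modnMm lucas3 // apery_mod3 // modnMm; congr (_ %% _); lia.
rewrite sum3 -/(apery' r) big_distrl /=; apply: sum_mod => b _.
rewrite aperyp_small //.
have := T 0 b isT; rewrite !addn0 => H0.
rewrite (add3_mod H0 (T 1 b isT) (T 2 b isT)).
congr (_ %% _); lia.
Qed.

Lemma aperyp3 n : 0 < n -> apery' n %% 3 = 0.
Proof.
elim/ltn_ind: n => n IH n0.
have -> : n = 3 * (n %/ 3) + n %% 3 by rewrite {1}(divn_eq n 3); lia.
rewrite aperyp_mod3 ?ltn_pmod //.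
have : n %% 3 < 3 by rewrite ltn_pmod.
case Hr: (n %% 3) => [|[|[|]]] // _.
- rewrite -modnMml IH //; lia.
- rewrite -modnMmr (_ : apery' 1 %% 3 = 0) ?muln0 //.
  by rewrite /apery' /apery unlock.
- rewrite -modnMmr (_ : apery' 2 %% 3 = 0) ?muln0 //.
  by rewrite /apery' /apery unlock.
Qed.

Lemma binM {n a b} : b <= a -> a <= n ->
  'C(n, a) * 'C(a, b) = 'C(n, b) * 'C(n - b, a - b).
Proof.
move=> ba an; apply/eqP.
rewrite -(@eqn_pmul2r (b`! * (a - b)`! * (n - a)`!)); last by rewrite !muln_gt0 !fact_gt0.
have e1 : 'C(n, a) * 'C(a, b) * (b`! * (a - b)`! * (n - a)`!) = n`!.
  by rewrite -(bin_fact an) -(bin_fact ba); lia.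
have e2 : 'C(n, b) * 'C(n - b, a - b) * (b`! * (a - b)`! * (n - a)`!) = n`!.
  have bn : b <= n by lia.
  have h : a - b <= n - b by lia.
  rewrite -(bin_fact bn) -(bin_fact h) (_ : n - b - (a - b) = n - a); last by lia.
  lia.
by rewrite e1 e2.
Qed.

Lemma sum_bin n : \sum_(0 <= l < n.+1) 'C(n, l) = 2 ^ n.
Proof.
rewrite (_ : 2 = 1 + 1) // expnDn big_mkord; apply: eq_bigr => i _.
by rewrite !exp1n !muln1.
Qed.

Lemma central_even j : 0 < j -> 2 %| 'C(j.*2, j).
Proof.
case: j => [|j] // _.
rewrite (_ : j.+1.*2 = (j.*2.+1).+1); last by lia.
rewrite binS -{1}(bin_sub (_ : j <= j.*2.+1)); last by lia.
rewrite (_ : j.*2.+1 - j = j.+1); last by lia.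
by rewrite addnn -muln2 dvdn_mull.
Qed.

Lemma a_even k j : 0 < j -> 2 %| 'C(k, j) * 'C(k + j, j).
Proof.
move=> j0; have [kj|jk] := ltnP k j; first by rewrite bin_small.
have h1 : j <= j.*2 by lia.
have h2 : j.*2 <= k + j by lia.
have := binM (n := k + j) h1 h2.
have -> : k + j - j = k by lia.
have -> : j.*2 - j = j by lia.
move=> E; rewrite mulnC -E; by apply: dvdn_mull; apply: central_even.
Qed.

Definition Dl k := \sum_(0 <= j < k.+1) 'C(k, j) * 'C(k + j, j).

Lemma inner k i : i <= k -> \sum_(0 <= j < k.+1) 'C(k, j) * 'C(j, i) = 'C(k, i) * 2 ^ (k - i).
Proof.
move=> ik; have ik1 : i <= k.+1 by lia.
rewrite (big_cat_nat (leq0n i) ik1) /= big1_seq ?add0n; last first.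
  by move=> j /andP[_]; rewrite mem_index_iota => /andP[_ ji]; rewrite (bin_small ji) muln0.
rewrite -{1}(add0n i) big_addn.
rewrite (eq_big_nat _ _ (F2 := fun l => 'C(k, i) * 'C(k - i, l))); last first.
  move=> l /andP[_ hl].
  have h1 : i <= l + i by lia.
  have h2 : l + i <= k by lia.
  by rewrite (binM h1 h2) addnK.
by rewrite -big_distrr /= (_ : k.+1 - i = (k - i).+1) ?sum_bin //; lia.
Qed.

Lemma D_alt k : Dl k = \sum_(0 <= i < k.+1) 'C(k, i) * ('C(k, i) * 2 ^ (k - i)).
Proof.
have V j : j <= k -> 'C(k + j, j) = \sum_(0 <= i < k.+1) 'C(k, i) * 'C(j, i).
  move=> jk; rewrite -(Vandermonde k j j) -(big_mkord xpredT (fun i => 'C(k, i) * 'C(j, j - i))).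
  rewrite (eq_big_nat _ _ (F2 := fun i => 'C(k, i) * 'C(j, i))); last first.
    by move=> i /andP[_ hi]; rewrite bin_sub.
  apply: sum_ext0; first by lia.
  by move=> i /andP[hi _]; rewrite (bin_small hi) muln0.
rewrite /Dl (eq_big_nat _ _ (F2 := fun j => \sum_(0 <= i < k.+1) 'C(k, j) * ('C(k, i) * 'C(j, i)))); last first.
  by move=> j /andP[_ hj]; rewrite V ?big_distrr //; lia.
rewrite exchange_big /=; apply: eq_big_nat => i /andP[_ hi].
have hik : i <= k by lia.
rewrite -(@inner k i hik).
rewrite big_distrr /=; apply: eq_big_nat => j _; lia.
Qed.

Lemma sq2 x : x * x * 2 = x * 2 %[mod 4].
Proof.
rewrite (mulnC (x * x)) (mulnC x) -!(muln_modr 2 _ 2) !modn2 oddM andbb //.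
Qed.

Lemma D_mod4 k : Dl k = 1 + 2 * k %[mod 4].
Proof.
rewrite D_alt; case: k => [|k]; first by rewrite big_nat1.
rewrite !big_nat_recr //= subnn binn binSn (_ : k.+1 - k = 1); last by lia.
have S0 : \sum_(0 <= i < k) 'C(k.+1, i) * ('C(k.+1, i) * 2 ^ (k.+1 - i)) = 0 %[mod 4].
  rewrite mod0n -modn_summ big1_seq ?mod0n //.
  move=> i /andP[_]; rewrite mem_index_iota => /andP[_ hi].
  rewrite (_ : k.+1 - i = (k.+1 - i - 2) + 2); last by lia.
  by rewrite expnD (_ : 2 ^ 2 = 4) // !mulnA modnMl.
rewrite -addnA -modnDml S0 mod0n add0n.
rewrite (_ : k.+1 * (k.+1 * 2 ^ 1) = k.+1 * k.+1 * 2); last by rewrite expn1 mulnA.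
by rewrite -modnDml sq2 modnDml; congr (_ %% _); lia.
Qed.

Lemma sq_even a : 2 %| a -> a ^ 2 = 2 * a %[mod 8].
Proof.
move/dvdnP => [c ->].
rewrite (_ : (c * 2) ^ 2 = 4 * (c * c)); last by rewrite expnMn; lia.
rewrite (_ : 2 * (c * 2) = 4 * c); last by lia.
by rewrite -!(muln_modr 4 _ 2) !modn2 oddM andbb.
Qed.

Lemma A_D k : apery k + 1 = 2 * Dl k %[mod 8].
Proof.
rewrite /apery /Dl !big_nat_recl // !addn0 !bin0 mulnDr big_distrr /=.
have S : \sum_(0 <= j < k) 'C(k, j.+1) ^ 2 * 'C(k + j.+1, j.+1) ^ 2 =
         \sum_(0 <= j < k) 2 * ('C(k, j.+1) * 'C(k + j.+1, j.+1)) %[mod 8].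
  apply: sum_mod => j _; rewrite -expnMn sq_even //; exact: a_even.
rewrite (_ : 1 ^ 2 * 1 ^ 2 + _ + 1 = 2 + \sum_(0 <= j < k) 'C(k, j.+1) ^ 2 * 'C(k + j.+1, j.+1) ^ 2); last first.
  by rewrite !exp1n; lia.
by rewrite -modnDmr S modnDmr.
Qed.

Lemma A_mod8 k : apery k = 1 + 4 * k %[mod 8].
Proof.
apply/eqP; rewrite -(eqn_modDr 1); apply/eqP.
rewrite A_D (_ : 8 = 2 * 4) // -!muln_modr D_mod4 muln_modr.
congr (_ %% _); lia.
Qed.

Lemma sum_kbin n : \sum_(0 <= k < n.+2) k * 'C(n.+1, k) = n.+1 * 2 ^ n.
Proof.
rewrite big_nat_recl // mul0n add0n.
rewrite (eq_big_nat _ _ (F2 := fun k => n.+1 * 'C(n, k))); last first.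
  by move=> k _; rewrite -mul_bin_diag.
by rewrite -big_distrr /= sum_bin.
Qed.

Lemma Ap_mod8 n : 3 <= n -> apery' n %% 8 = 0.
Proof.
move=> n3; rewrite /apery'.
rewrite (@sum_mod 8 0 n.+1 _ (fun k => 'C(n, k) + 4 * (k * 'C(n, k)))); last first.
  move=> k _; rewrite -modnMmr A_mod8 modnMmr; congr (_ %% _); lia.
rewrite big_split /= -big_distrr /= sum_bin.
case: n n3 => [|[|[|m]]] // _.
rewrite sum_kbin !expnS !mulnA.
rewrite (_ : 2 * 2 * 2 * 2 ^ m + 4 * m.+3 * 2 * 2 * 2 ^ m = (2 ^ m + m.+3 * 2 * 2 ^ m) * 8); last by lia.
by rewrite modnMl.
Qed.

Theorem lemma4p2 (n : nat) : 3 <= n -> apery' n = 0 %[mod 24].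
Proof.
move=> n3; rewrite mod0n; apply/eqP; change (24 %| apery' n).
rewrite (_ : 24 = 3 * 8) // Gauss_dvd //; apply/andP; split; apply/eqP.
- by apply: aperyp3; lia.
- exact: Ap_mod8.
Qed.
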